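(* Consider a repeater chain in the model described in the context with $N+2$ nodes labelled $0,1,\dots,N+1$, where the end nodes $0$ and $N+1$ are a distance $L>0$ apart and the $N$ repeater nodes are placed along a line between them. Let $\ell_i>0$ denote the distance between nodes $i$ and $i+1$ for $i=0,\dots,N$, so that $\sum_{i=0}^N\ell_i=L$. Then the entangling rate $R$ of the chain, as a function of $(\ell_0,\dots,\ell_N)$, is maximal when the repeaters are placed equidistantly, i.e. when $\ell_i=L/(N+1)$ for all $i$.
   Context: Repeater-chain model (swap-ASAP, synchronized attempts). The chain has edges between consecutive nodes; edge $i$ has length $\ell_i\ge 0$ (in km). Entanglement generation proceeds in synchronized rounds, each of duration $t_{\mathrm{att}}=\frac1c\max_i\ell_i$ with $c=200{,}000$ km/s. In each round, every edge that has not yet succeeded makes an attempt which succeeds independently with probability $p_i=10^{-\alpha\ell_i/10}$, $\alpha=0.2\ \mathrm{km}^{-1}$. Thus the number of rounds $X_i$ until edge $i$ succeeds is geometric on $\{1,2,\dots\}$ with parameter $p_i$, the $X_i$ are independent, and end-to-end entanglement is complete after time $T_{\mathrm{done}}=t_{\mathrm{att}}\max_iX_i$. The entangling rate is $R=1/\mathbb E[T_{\mathrm{done}}]$. *)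

(* Defs.v *)
From HB Require Import structures.
From mathcomp Require Import all_boot all_order all_algebra.
From mathcomp Require Import all_classical all_reals all_analysis.
Set Implicit Arguments. Unset Strict Implicit. Unset Printing Implicit Defensive.
Import Order.TTheory GRing.Theory Num.Theory.
Local Open Scope ring_scope.
Local Open Scope classical_set_scope.

Section Repeater.
Variable R : realType.

(* attenuation alpha = 0.2 km^-1, speed of light in fibre c = 200000 km/s *)
Definition alpha : R := 2 / 10.
Definition c_light : R := 2 * 10 ^+ 5.

Definition psucc (l : R) : R := 10 `^ (- (alpha * l / 10)).

Definition t_att (N : nat) (l : 'I_N.+1 -> R) : R :=
  (\big[Num.max/0]_(i < N.+1) l i) / c_light.

Definition geom_pmf (p : R) (k : nat) : R :=
  if k is k'.+1 then p * (1 - p) ^+ k' else 0.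

Definition joint_pmf (N : nat) (l : 'I_N.+1 -> R) (x : 'I_N.+1 -> nat) : R :=
  \prod_(i < N.+1) geom_pmf (psucc (l i)) (x i).

Definition T_done (N : nat) (l : 'I_N.+1 -> R) (x : 'I_N.+1 -> nat) : R :=
  t_att l * (\max_(i < N.+1) x i)%N%:R.

Definition ET_done (N : nat) (l : 'I_N.+1 -> R) : \bar R :=
  esum [set: 'I_N.+1 -> nat] (fun x => (T_done l x * joint_pmf l x)%:E).

Definition rate (N : nat) (l : 'I_N.+1 -> R) : R := (fine (ET_done l))^-1.

End Repeater.

(* Main.v *)
Require Import Defs.
From HB Require Import structures.
From mathcomp Require Import all_boot all_order all_algebra finmap.
From mathcomp Require Import all_classical all_reals all_analysis.
From mathcomp Require Import ring lra.
Import Order.TTheory GRing.Theory Num.Theory.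
Import numFieldNormedType.Exports.
Local Open Scope ring_scope.
Local Open Scope classical_set_scope.

Section SA.
Variable R : realType.
Definition Af (n : nat) (t : R) : R := 1 - (1 - expR t) ^+ n.
Definition dAf (n : nat) (t : R) : R := n%:R * (1 - expR t) ^+ n.-1 * expR t.
Lemma is_derive_Af n (t : R) : is_derive t (1:R) (Af n) (dAf n t).
Proof.
have h1 : is_derive t (1:R) (fun x : R => 1 - expR x) (- expR t).
  by apply: is_derive_eq; rewrite add0r mul1r.
have h2 : is_derive t (1:R) ((fun x : R => 1 - expR x) ^+ n) ((n%:R * (1 - expR t) ^+ n.-1) *: (- expR t)).
  exact: is_deriveX.
have h3 : is_derive t (1:R) (cst 1 - (fun x : R => 1 - expR x) ^+ n) (0 - (n%:R * (1 - expR t) ^+ n.-1) *: (- expR t)).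
  exact: is_deriveB.
have -> : Af n = (cst 1 - (fun x : R => 1 - expR x) ^+ n).
  by apply/funext => x; rewrite /Af exprfctE.
apply: is_derive_eq; rewrite /dAf sub0r /GRing.scale /= mulrN opprK //.
Qed.


Lemma ratio_mono (m : nat) (w v : R) : 0 < w -> w <= v -> v < 1 ->
  w ^+ m * (1 - w) / (1 - w ^+ m.+1) <= v ^+ m * (1 - v) / (1 - v ^+ m.+1).
Proof.
move=> w0 wv v1.
have v0 : 0 < v by apply: lt_le_trans wv.
have w1 : w < 1 by apply: le_lt_trans v1.
have fact (x : R) : 1 - x ^+ m.+1 = (1 - x) * \sum_(i < m.+1) x ^+ i.
  by rewrite -opprB subrX1 -mulNr opprB.
have S0 (x : R) : 0 < x -> 0 < \sum_(i < m.+1) x ^+ i.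
  move=> x0; rewrite big_ord_recl expr0 ltr_pwDl //.
  by apply: sumr_ge0 => i _; rewrite exprn_ge0 // ltW.
have e (x : R) : x < 1 -> x ^+ m * (1 - x) / ((1 - x) * \sum_(i < m.+1) x ^+ i) = x ^+ m / \sum_(i < m.+1) x ^+ i.
  move=> x1; rewrite invfM mulrA mulfK // subr_eq0 gt_eqF //.
rewrite !fact !e //.
rewrite ler_pdivrMr ?S0 // mulrAC ler_pdivlMr ?S0 //.
rewrite !mulr_sumr; apply: ler_sum => i _.
have key (j k : nat) : w ^+ (j + k) * v ^+ j <= v ^+ (j + k) * w ^+ j.
  rewrite !exprD.
  rewrite [w ^+ j * _ * _]mulrAC [X in _ <= X]mulrAC [v ^+ j * w ^+ j]mulrC.
  rewrite ler_pM2l ?mulr_gt0 ?exprn_gt0 //.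
  by apply: lerXn2r; rewrite // nnegrE ltW.
by have := key i (m - i)%N; rewrite subnKC // -ltnS.
Qed.

Definition phi (n : nat) (t : R) : R := ln (Af n t).
Definition dphi (n : nat) (t : R) : R := dAf n t / Af n t.

Lemma Af_gt0 m (t : R) : t < 0 -> 0 < Af m.+1 t.
Proof.
move=> t0; rewrite /Af subr_gt0 exprn_ilt1 //.
- by rewrite subr_ge0 ltW // expR_lt1.
- by rewrite ltrBlDr ltrDl expR_gt0.
Qed.

Lemma is_derive_phi m (t : R) : t < 0 -> is_derive t (1:R) (phi m.+1) (dphi m.+1 t).
Proof.
move=> t0.
have h := @is_derive1_comp R (@ln R) (Af m.+1) t _ _ (is_derive1_ln (Af_gt0 m t t0)) (is_derive_Af m.+1 t).
apply: is_derive_eq; rewrite /dphi mulrC //.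
Qed.

Lemma dphi_mono m (s t : R) : s <= t -> t < 0 -> dphi m.+1 t <= dphi m.+1 s.
Proof.
move=> st t0.
have s0 : s < 0 by apply: le_lt_trans t0.
have ex (x : R) : x < 0 -> dphi m.+1 x = m.+1%:R * ((1 - expR x) ^+ m * (1 - (1 - expR x)) / (1 - (1 - expR x) ^+ m.+1)).
  move=> _; rewrite /dphi /dAf /Af.
  by rewrite subKr !mulrA.

rewrite !ex // ler_pM2l ?ltr0Sn //; apply: ratio_mono.
- by rewrite subr_gt0 expR_lt1.
- by rewrite lerD2l lerN2 ler_expR.
- by rewrite ltrBlDr ltrDl expR_gt0.
Qed.

Lemma phi_cont m (a b : R) : b < 0 -> {within `[a, b], continuous (phi m.+1)}.
Proof.
move=> b0; apply: derivable_within_continuous => x; rewrite in_itv /= => /andP[_ xb].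
have x0 : x < 0 by apply: le_lt_trans b0.
by have [] := is_derive_phi m x x0.
Qed.

Lemma itv_lt (x a b : R) : x \in `]a, b[%R -> x < b.
Proof. by rewrite in_itv /= => /andP[]. Qed.
Lemma itv_gt (x a b : R) : x \in `]a, b[%R -> a < x.
Proof. by rewrite in_itv /= => /andP[]. Qed.

Lemma tangent m (t t0 : R) : t < 0 -> t0 < 0 ->
  phi m.+1 t <= phi m.+1 t0 + dphi m.+1 t0 * (t - t0).
Proof.
move=> tn t0n.
case: (ltgtP t t0) => [tt0|t0t|->]; last by rewrite subrr mulr0 addr0.
- have [c cI hc] := @MVT R (phi m.+1) (dphi m.+1) t t0 tt0
    (fun x xI => is_derive_phi m x (lt_trans (itv_lt x _ _ xI) t0n)) (phi_cont m t t0 t0n).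
  have c1 : c <= t0 by rewrite ltW // (itv_lt c _ _ cI).
  have := dphi_mono m c t0 c1 t0n => hd.
  have : phi m.+1 t = phi m.+1 t0 - dphi m.+1 c * (t0 - t) by rewrite -hc opprB addrC subrK.
  move=> ->; rewrite -(opprB t0 t) mulrN lerD2l lerN2 ler_wpM2r // subr_ge0 ltW //.
- have [c cI hc] := @MVT R (phi m.+1) (dphi m.+1) t0 t t0t
    (fun x xI => is_derive_phi m x (lt_trans (itv_lt x _ _ xI) tn)) (phi_cont m t0 t tn).
  have c1 : t0 <= c by rewrite ltW // (itv_gt c _ _ cI).
  have := dphi_mono m t0 c c1 (lt_trans (itv_lt c _ _ cI) tn) => hd.
  have : phi m.+1 t = phi m.+1 t0 + dphi m.+1 c * (t - t0) by rewrite -hc addrC subrK.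
  move=> ->; rewrite lerD2l ler_wpM2r // subr_ge0 ltW //.
Qed.

Lemma prod_Af_le (m M : nat) (t : 'I_M -> R) (t0 : R) :
  (forall i, t i < 0) -> t0 < 0 -> \sum_i t i = M%:R * t0 ->
  \prod_i Af m (t i) <= Af m t0 ^+ M.
Proof.
move=> tn t0n hs.
case: m => [|m].
  have A0 (x : R) : Af 0 x = 0 by rewrite /Af expr0 subrr.
  by rewrite A0 (eq_bigr (fun _ => 0)) ?prodr_const ?card_ord // => i _; rewrite A0.
have eA (x : R) : x < 0 -> Af m.+1 x = expR (phi m.+1 x).
  by move=> x0; rewrite /phi lnK // posrE Af_gt0.
rewrite (eq_bigr (fun i => expR (phi m.+1 (t i)))); last by move=> i _; rewrite eA.
rewrite -expR_sum eA // -expRM_natl ler_expR.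
apply: le_trans (ler_sum _ (fun i _ => tangent m (t i) t0 (tn i) t0n)) _.
rewrite big_split /= -mulr_sumr sumrB hs !sumr_const card_ord.
by rewrite -[t0 *+ M]mulr_natl subrr mulr0 addr0 mulr_natl.

Qed.
End SA.

Section P.
Variable R : realType.
Variable m : nat.
Definition pmf (p : 'I_m -> R) (x : 'I_m -> nat) : R := \prod_i geom_pmf (p i) (x i).
Definition ef K (f : {ffun 'I_m -> 'I_K.+1}) : 'I_m -> nat := fun i => f i.
Arguments ef {K} f i.
Definition mx (x : 'I_m -> nat) : nat := (\max_(i < m) x i)%N.
Definition Fp (p : 'I_m -> R) (n : nat) : R := \prod_i (1 - (1 - p i) ^+ n).

Lemma geom_sum (p : R) n : \sum_(k < n.+1) geom_pmf p k = 1 - (1 - p) ^+ n.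
Proof.
elim: n => [|n IH]; first by rewrite big_ord1 /= expr0 subrr.
rewrite big_ord_recr /= IH exprS; ring.
Qed.

Lemma ind_max (x : 'I_m -> nat) n : ((mx x <= n)%N%:R : R) = \prod_i ((x i <= n)%N%:R).
Proof.
rewrite /mx; case: bigmax_leqP => H.
  by rewrite big1 // => i _; rewrite H.
have : ~~ [forall i, x i <= n]%N.
  by apply/negP => /forallP h; apply: H => i _; exact: h i.
rewrite negb_forall => /existsP[i Hi].
by rewrite (bigD1 i) //= (negbTE Hi) mul0r.
Qed.

Lemma boxF p n K : (n <= K)%N ->
  \sum_(f : {ffun 'I_m -> 'I_K.+1}) pmf p (ef f) * ((mx (ef f) <= n)%N%:R) = Fp p n.
Proof.
move=> nK.
have e1 (f : {ffun 'I_m -> 'I_K.+1}) : pmf p (ef f) * ((mx (ef f) <= n)%N%:R) =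
    \prod_i (geom_pmf (p i) (f i) * ((f i <= n)%N%:R)).
  by rewrite ind_max /pmf -big_split.
rewrite (eq_bigr _ (fun f _ => e1 f)) -(bigA_distr_bigA (fun i (k : 'I_K.+1) => geom_pmf (p i) k * ((k <= n)%N%:R))).
apply: eq_bigr => i _.
rewrite -geom_sum (@big_ord_widen _ _ _ n.+1 K.+1 (fun k => geom_pmf (p i) k) nK) [RHS]big_mkcond /=.
by apply: eq_bigr => k _; rewrite ltnS; case: (k <= n)%N; rewrite ?mulr1 ?mulr0.
Qed.

Lemma min_sum a K : \sum_(n < K) (1 - ((a <= n)%N%:R : R)) = (minn a K)%:R.
Proof.
elim: K => [|K IH]; first by rewrite big_ord0 minn0.
rewrite big_ord_recr /= IH; case: (leqP a K) => h.
  by rewrite subrr addr0 !(minn_idPl _) // ltnW.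
by rewrite /= subr0 natr1 (minn_idPr h).
Qed.

Lemma mx_le K (f : {ffun 'I_m -> 'I_K.+1}) : (mx (ef f) <= K)%N.
Proof. by apply/bigmax_leqP => i _; rewrite /ef -ltnS. Qed.

Lemma Sb_aux p K K' : (K <= K')%N ->
  \sum_(f : {ffun 'I_m -> 'I_K'.+1}) pmf p (ef f) * (minn (mx (ef f)) K)%:R
  = \sum_(n < K) (Fp p K' - Fp p n).
Proof.
move=> KK.
have tot : \sum_(f : {ffun 'I_m -> 'I_K'.+1}) pmf p (ef f) = Fp p K'.
  rewrite -(@boxF p K' K' (leqnn K')); apply: eq_bigr => f _.
  by rewrite (@mx_le K' f) mulr1.
under eq_bigr => f _ do rewrite -min_sum mulr_sumr.
rewrite exchange_big /=; apply: eq_bigr => n _.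
rewrite -tot -(@boxF p n K' (ltnW (leq_trans (ltn_ord n) KK))) -sumrB.
by apply: eq_bigr => f _; rewrite mulrBr mulr1.
Qed.


Definition Sb (p : 'I_m -> R) K :=
  \sum_(f : {ffun 'I_m -> 'I_K.+1}) pmf p (ef f) * (mx (ef f))%:R.

Lemma Sb_eq p K : Sb p K = \sum_(n < K) (Fp p K - Fp p n).
Proof.
rewrite -Sb_aux //; apply: eq_bigr => f _.
by rewrite (minn_idPl (@mx_le K f)).
Qed.

Lemma geom_ge0 (p : R) k : 0 <= p <= 1 -> 0 <= geom_pmf p k.
Proof.
move=> /andP[p0 p1]; case: k => [|k] //=.
by rewrite mulr_ge0 // exprn_ge0 // subr_ge0.
Qed.

Lemma pmf_ge0 p x : (forall i, 0 <= p i <= 1) -> 0 <= pmf p x.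
Proof. by move=> hp; apply: prodr_ge0 => i _; apply: geom_ge0. Qed.

Lemma Sb_ge p K K' : (K <= K')%N -> (forall i, 0 <= p i <= 1) ->
  \sum_(n < K) (Fp p K' - Fp p n) <= Sb p K'.
Proof.
move=> KK hp; rewrite -Sb_aux //; apply: ler_sum => f _.
by rewrite ler_wpM2l ?pmf_ge0 // ler_nat geq_minl.
Qed.

Lemma Fp_bounds p n : (forall i, 0 <= p i <= 1) -> 0 <= Fp p n <= 1.
Proof.
move=> hp.
have h i : 0 <= 1 - (1 - p i) ^+ n <= 1.
  have /andP[p0 p1] := hp i.
  rewrite subr_ge0 gerBl exprn_ge0 ?subr_ge0 // andbT.
  by rewrite exprn_ile1 // ?subr_ge0 // lerBlDr lerDl.
apply/andP; split; first by apply: prodr_ge0 => i _; have /andP[] := h i.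
by apply: prodr_ile1 => i _; apply: h.
Qed.
End P.
Arguments ef {m K} f i.
Arguments Sb {R m} p K.
Arguments pmf {R m} p x.
Arguments Fp {R m} p n.
Arguments mx {m} x.

Section E.
Variable R : realType.

Lemma fsbigT_fin (T : finType) (a : T -> \bar R) :
  \sum_(x \in [set: T]) a x = \sum_(x : T) a x.
Proof.
rewrite (fsbigTE [fset x | x : T]%fset); last by move=> i; rewrite in_imfset.
by rewrite big_imfset //= big_enum.
Qed.

Lemma ef_inj N K : injective (@ef N.+1 K).
Proof.
move=> f g e; apply/ffunP => i; apply/val_inj.
by have := congr1 (fun h => h i) e.
Qed.

Lemma box_sum (N K : nat) (l : 'I_N.+1 -> R) :
  \sum_(x \in [set ef f | f in [set: {ffun 'I_N.+1 -> 'I_K.+1}]])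
     ((T_done l x * joint_pmf l x)%:E)
  = (t_att l * Sb (fun i => psucc (l i)) K)%:E.
Proof.
rewrite fsbig_image; last by move=> f g _ _; apply: ef_inj.
rewrite fsbigT_fin sumEFin; congr (_%:E).
rewrite /Sb mulr_sumr; apply: eq_bigr => f _.
rewrite /T_done /joint_pmf /pmf /mx; ring.
Qed.

Lemma ET_lb (N K : nat) (l : 'I_N.+1 -> R) :
  ((t_att l * Sb (fun i => psucc (l i)) K)%:E <= ET_done l)%E.
Proof.
apply: esum_ge; exists [set ef f | f in [set: {ffun 'I_N.+1 -> 'I_K.+1}]].
  by split; [apply: finite_image; apply: finite_finset|].
by rewrite box_sum.
Qed.

Lemma fin_box (N : nat) (X : set ('I_N.+1 -> nat)) : finite_set X ->
  exists K, X `<=` [set ef f | f in [set: {ffun 'I_N.+1 -> 'I_K.+1}]].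
Proof.
move/finite_fsetP => [B ->].
exists (\max_(x <- B) mx x)%N => x /= xB.
exists [ffun i => inord (x i)] => //.
apply/funext => i; rewrite /ef ffunE inordK // ltnS.
apply: leq_trans (leq_bigmax i) _.
by have := (@leq_bigmax_seq _ (B : seq _) xpredT mx x xB isT).
Qed.

Lemma ET_le (N : nat) (le ll : 'I_N.+1 -> R) :
  (forall x, 0 <= T_done le x * joint_pmf le x) ->
  (forall K e, 0 < e -> exists K',
     t_att le * Sb (fun i => psucc (le i)) K <= t_att ll * Sb (fun i => psucc (ll i)) K' + e) ->
  (ET_done le <= ET_done ll)%E.
Proof.
move=> a0 H.
apply: ge_ereal_sup => _ [X [finX _] <-].
have [K XK] := @fin_box N X finX.
apply: (@le_trans _ _ (\sum_(x \in [set ef f | f in [set: {ffun 'I_N.+1 -> 'I_K.+1}]])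
     ((T_done le x * joint_pmf le x)%:E))).
  apply: lee_fsum_nneg_subset => //.
  - by apply: finite_image; apply: finite_finset.
  - by move=> x; rewrite !inE => /XK.
  - by move=> x _; rewrite lee_fin.
rewrite box_sum; apply/lee_addgt0Pr => e e0.
have [K' hK] := H K e e0.
apply: (@le_trans _ _ ((t_att ll * Sb (fun i => psucc (ll i)) K' + e)%:E)).
  by rewrite lee_fin.
by rewrite EFinD leeD2r // ET_lb.
Qed.
End E.

Arguments Af {R} n t.
Arguments Fp_bounds {R m p} n.
Arguments ET_lb {R}.
Arguments ET_le {R}.
Section C.
Variable R : realType.
Definition kk : R := - (@alpha R / 10) * ln 10.

Lemma kk_lt0 : kk < 0.
Proof.
rewrite /kk mulNr oppr_lt0 mulr_gt0 // ?ln_gt0 ?ltr1n //.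
by rewrite /alpha !divr_gt0.
Qed.

Lemma psuccE (x : R) : psucc x = expR (x * kk).
Proof.
rewrite /psucc /powR ifF; last by rewrite pnatr_eq0.
by congr expR; rewrite /kk; ring.
Qed.

Lemma psucc_bounds (x : R) : 0 <= x -> 0 <= psucc x <= 1.
Proof.
move=> x0; rewrite psuccE expR_ge0 /= expR_le1.
by rewrite mulr_ge0_le0 // ltW // kk_lt0.
Qed.

Lemma psucc_anti (x y : R) : x <= y -> psucc y <= psucc x.
Proof. by move=> xy; rewrite !psuccE ler_expR ler_wnM2r // ltW // kk_lt0. Qed.

Lemma one_minus_prod k (b : 'I_k -> R) : (forall i, 0 <= b i <= 1) ->
  1 - \prod_i (1 - b i) <= \sum_i b i.
Proof.
elim: k b => [|k IH] b hb; first by rewrite !big_ord0 subrr.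
rewrite big_ord_recr big_ord_recr /=.
set P := \prod_(i < k) _.
have hP : 0 <= P <= 1.
  apply/andP; split; first by apply: prodr_ge0 => i _; have /andP[_ ?] := hb (widen_ord (leqnSn k) i); rewrite subr_ge0.
  apply: prodr_ile1 => i _; have /andP[h0 h1] := hb (widen_ord (leqnSn k) i).
  by rewrite subr_ge0 h1 /= lerBlDr lerDl.
have := IH (fun i => b (widen_ord (leqnSn k) i)) (fun i => hb _).
have /andP[b0 b1] := hb ord_max.
case/andP: hP => P0 P1 h.
have : P * b ord_max <= b ord_max by rewrite ler_piMl.
move=> hPb; rewrite -/P in h; rewrite mulrBr mulr1.
lra.
Qed.

Lemma small (Q e : R) (K : nat) : 0 <= Q < 1 -> 0 < e ->
  exists n, (K <= n)%N /\ Q ^+ n < e.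
Proof.
move=> /andP[Q0 Q1] e0.
have hc := @cvg_expr R Q ltac:(by rewrite ger0_norm).
have := @cvgr0_norm_lt _ _ _ _ _ _ hc e e0.
move=> [N _ HN].
exists (maxn K N); split; first by rewrite leq_maxl.
have := HN (maxn K N) (leq_maxr _ _).
by rewrite /= ger0_norm // exprn_ge0.
Qed.

Lemma bigmax_const (a : R) n : 0 <= a -> \big[Num.max/0]_(i < n.+1) a = a.
Proof.
move=> a0; apply/le_anti/andP; split.
  by apply: bigmax_le.
exact: (le_bigmax _ (fun _ => a) ord0).
Qed.

Lemma ET_le_main (N : nat) (L : R) (hL : 0 < L)
    (l : 'I_N.+1 -> R) (hpos : forall i, 0 < l i)
    (hsum : \sum_(i < N.+1) l i = L) :
  (ET_done (fun _ : 'I_N.+1 => (L / N.+1%:R)%R) <= ET_done l)%E /\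
  (0 < ET_done (fun _ : 'I_N.+1 => (L / N.+1%:R)%R))%E.
Proof.
set a := L / N.+1%:R.
have a0 : 0 < a by rewrite divr_gt0 // ltr0Sn.
set le := fun _ : 'I_N.+1 => a.
set pe := fun i => psucc (le i).
set pl := fun i => psucc (l i).
have hpl i : 0 <= pl i <= 1 by apply: psucc_bounds; rewrite ltW.
have hpe i : 0 <= pe i <= 1 by apply: psucc_bounds; rewrite ltW.
have lL i : l i <= L.
  rewrite -hsum (bigD1 i) //= lerDl sumr_ge0 // => j _; exact: ltW.
have c0 : 0 < @c_light R by rewrite /c_light mulr_gt0 // exprn_gt0.
have teE : t_att le = a / c_light R by rewrite /t_att bigmax_const // ltW.
have te0 : 0 <= t_att le by rewrite teE divr_ge0 // ltW.
have tle : t_att le <= t_att l.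
  rewrite teE /t_att ler_pM2r ?invr_gt0 //.
  set M := \big[Num.max/0]_(i < N.+1) l i.
  have lM i : l i <= M by exact: (le_bigmax _ l i).
  rewrite /a ler_pdivrMr ?ltr0Sn // -hsum.
  apply: le_trans (ler_sum _ (fun i _ => lM i)) _.
  by rewrite sumr_const card_ord mulr_natr.
have tl0 : 0 <= t_att l by apply: le_trans tle.
have FF n : Fp pl n <= Fp pe n.
  have E1 : Fp pl n = \prod_i Af n (l i * kk).
    by apply: eq_bigr => i _; rewrite /pl psuccE.
  have E2 : Fp pe n = Af n (a * kk) ^+ N.+1.
    rewrite /Fp (eq_bigr (fun _ => Af n (a * kk))) ?prodr_const ?card_ord //.
    by move=> i _; rewrite /pe /le psuccE.
  rewrite E1 E2; apply: prod_Af_le.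
  - by move=> i; rewrite pmulr_rlt0 // kk_lt0.
  - by rewrite pmulr_rlt0 // kk_lt0.
  - rewrite -mulr_suml hsum /a; field.
    by rewrite addrC natr1 pnatr_eq0.
have a_nonneg x : 0 <= T_done le x * joint_pmf le x.
  rewrite mulr_ge0 //; first by rewrite /T_done mulr_ge0.
  by apply: pmf_ge0.
split.
  apply: ET_le => // K e e0.
  set Q := 1 - psucc L.
  have hQ : 0 <= Q < 1.
    have /andP[p0 p1] := psucc_bounds L (ltW hL).
    rewrite subr_ge0 p1 /= ltrBlDr ltrDl psuccE expR_gt0 //.
  set C := t_att l * K%:R * N.+1%:R.
  have C0 : 0 <= C.
    by rewrite /C; apply: mulr_ge0; [apply: mulr_ge0|]; rewrite ?ler0n.
  have [n [Kn Hn]] := small _ _ K hQ (divr_gt0 e0 (ltr_wpDl C0 ltr01)).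
  exists n.
  rewrite Sb_eq.
  have s1 : t_att le * \sum_(j < K) (Fp pe K - Fp pe j) <= t_att le * \sum_(j < K) (1 - Fp pe j).
    rewrite ler_wpM2l //; apply: ler_sum => j _; rewrite lerD2r.
    by have /andP[] := Fp_bounds K hpe.
  have s2 : t_att le * \sum_(j < K) (1 - Fp pe j) <= t_att l * \sum_(j < K) (1 - Fp pl j).
    apply: ler_pM => //.
      by apply: sumr_ge0 => j _; rewrite subr_ge0; have /andP[] := Fp_bounds j hpe.
    by apply: ler_sum => j _; rewrite lerD2l lerN2.
  have s3 : t_att l * \sum_(j < K) (1 - Fp pl j) =
      t_att l * \sum_(j < K) (Fp pl n - Fp pl j) + t_att l * (K%:R * (1 - Fp pl n)).
    rewrite -mulrDr; congr (_ * _).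
    have -> : K%:R * (1 - Fp pl n) = \sum_(j < K) (1 - Fp pl n).
      by rewrite sumr_const card_ord mulr_natl.
    rewrite -big_split /=.
    by apply: eq_bigr => j _; ring.
  have s4 : t_att l * \sum_(j < K) (Fp pl n - Fp pl j) <= t_att l * Sb pl n.
    by rewrite ler_wpM2l // Sb_ge.
  have s5 : t_att l * (K%:R * (1 - Fp pl n)) <= e.
    have h1 : 1 - Fp pl n <= N.+1%:R * Q ^+ n.
      rewrite /Fp; apply: le_trans (one_minus_prod _ (fun i => (1 - pl i) ^+ n) _) _.
        move=> i; have /andP[p0 p1] := hpl i.
        by rewrite exprn_ge0 ?subr_ge0 //= exprn_ile1 // ?subr_ge0 // lerBlDr lerDl.
      have -> : N.+1%:R * Q ^+ n = \sum_(i < N.+1) Q ^+ n.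
        by rewrite sumr_const card_ord mulr_natl.
      apply: ler_sum => i _; apply: lerXn2r; rewrite ?nnegrE ?subr_ge0.
      - by have /andP[] := hpl i.
      - by have /andP[] := psucc_bounds L (ltW hL).
      - by rewrite /Q lerD2l lerN2 psucc_anti.
    apply: le_trans (_ : C * (e / (C + 1)) <= e).
      apply: (@le_trans _ _ (C * Q ^+ n)).
        have -> : C * Q ^+ n = t_att l * (K%:R * (N.+1%:R * Q ^+ n)) by rewrite /C; ring.
        by apply: ler_wpM2l => //; apply: ler_wpM2l => //; exact: ler0n.
      by apply: ler_wpM2l => //; apply: ltW.
    rewrite mulrA ler_pdivrMr ?ltr_wpDl // mulrDr mulr1 mulrC lerDl ltW //.
  lra.
have := ET_lb N 1 le.
rewrite Sb_eq big_ord1.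
have F0 : Fp pe 0 = 0 by rewrite /Fp big_ord_recr /= expr0 subrr mulr0.
rewrite F0 subr0 => h; apply: lt_le_trans h.
rewrite lte_fin mulr_gt0 //; first by rewrite teE divr_gt0.
rewrite /Fp; apply: prodr_gt0 => i _; rewrite expr1 subKr.
by rewrite /pe /le psuccE expR_gt0.
Qed.

End C.

Local Close Scope classical_set_scope.

Theorem mainTheorem2 (R : realType) (N : nat) (L : R) (hL : 0 < L)
    (l : 'I_N.+1 -> R) (hpos : forall i, 0 < l i)
    (hsum : \sum_(i < N.+1) l i = L) :
  rate l <= rate (fun _ : 'I_N.+1 => L / N.+1%:R).
Proof.
have [h1 h2] := ET_le_main R N L hL l hpos hsum.
rewrite /rate.
set x := ET_done l in h1 *; set y := ET_done _ in h1 h2 *.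
have y0 : (0 <= y)%E by apply: ltW.
case: x h1 => [r| |] h1.
- have yfin : y \is a fin_num by rewrite ge0_fin_numE // (le_lt_trans h1) // ltry.
  have fy : 0 < fine y by rewrite fine_gt0 // h2 /= ltey_eq yfin.
  have : fine y <= r by rewrite -lee_fin fineK.
  move=> yr; rewrite /= lef_pV2 ?posrE //; exact: lt_le_trans yr.
- by rewrite /= invr0 invr_ge0 fine_ge0.
- by move: (le_trans y0 h1).
Qed.
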